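(* Let $X$ be an $m\times m$ Hermitian positive definite matrix and $n\ge1$ an integer. Then the function $f_{X,n}(Y):=\operatorname{tr}\{(XY^{-1})^n\}$ is strictly convex on the set of $m\times m$ Hermitian positive definite matrices $Y$. *)

(* Defs.v *)
From HB Require Import structures.
From mathcomp Require Import all_boot all_order all_algebra.
From mathcomp Require Import all_reals.
From mathcomp.real_closed Require Import complex.
Set Implicit Arguments. Unset Strict Implicit. Unset Printing Implicit Defensive.
Import Order.TTheory GRing.Theory Num.Theory.
Local Open Scope ring_scope.

Definition ctrmx (C : numClosedFieldType) (m n : nat) (A : 'M[C]_(m, n)) : 'M[C]_(n, m) :=
  (map_mx Num.conj A)^T.

Definition hermitian (C : numClosedFieldType) (m : nat) (A : 'M[C]_m) : Prop :=
  ctrmx A = A.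

Definition posdef (C : numClosedFieldType) (m : nat) (A : 'M[C]_m) : Prop :=
  forall v : 'cV[C]_m, v != 0 -> 0 < (ctrmx v *m A *m v) 0 0.

Definition hpd (C : numClosedFieldType) (m : nat) (A : 'M[C]_m) : Prop :=
  hermitian A /\ posdef A.

Definition fXn (C : numClosedFieldType) (m : nat) (X : 'M[C]_m) (n : nat) (Y : 'M[C]_m) : C :=
  \tr ((X *m invmx Y) ^+ n).

(* Main.v *)
Require Import Defs.
From HB Require Import structures.
From mathcomp Require Import all_boot all_order all_algebra.
From mathcomp Require Import all_reals.
From mathcomp.real_closed Require Import complex.
From mathcomp Require Import sesquilinear spectral ring.
Set Implicit Arguments. Unset Strict Implicit. Unset Printing Implicit Defensive.
Import Order.TTheory GRing.Theory Num.Theory.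
Local Open Scope ring_scope.


Section Basics.
Variable C : numClosedFieldType.

Lemma ctrmx_mul m n p (A : 'M[C]_(m, n)) (B : 'M[C]_(n, p)) :
  ctrmx (A *m B) = ctrmx B *m ctrmx A.
Proof. by rewrite /ctrmx map_mxM trmx_mul. Qed.

Lemma ctrmxK m n (A : 'M[C]_(m, n)) : ctrmx (ctrmx A) = A.
Proof. by apply/matrixP => i j; rewrite !mxE conjCK. Qed.

Lemma ctrmxD m n (A B : 'M[C]_(m, n)) : ctrmx (A + B) = ctrmx A + ctrmx B.
Proof. by apply/matrixP => i j; rewrite !mxE rmorphD. Qed.

Lemma ctrmxN m n (A : 'M[C]_(m, n)) : ctrmx (- A) = - ctrmx A.
Proof. by apply/matrixP => i j; rewrite !mxE rmorphN. Qed.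

Lemma ctrmxZ m n c (A : 'M[C]_(m, n)) : ctrmx (c *: A) = c^* *: ctrmx A.
Proof. by apply/matrixP => i j; rewrite !mxE rmorphM. Qed.

Lemma ctrmx1 m : ctrmx (1%:M : 'M[C]_m) = 1%:M.
Proof. by apply/matrixP => i j; rewrite !mxE rmorphMn rmorph1 eq_sym. Qed.

Lemma ctrmx_diag m (d : 'rV[C]_m) : ctrmx (diag_mx d) = diag_mx (map_mx Num.conj d).
Proof. by rewrite /ctrmx map_diag_mx tr_diag_mx. Qed.

Lemma ctrmxE m n (A : 'M[C]_(m, n)) : ctrmx A = (A ^t Num.conj)%sesqui.
Proof. by rewrite /ctrmx map_trmx. Qed.

Definition unitary m (U : 'M[C]_m) := U *m ctrmx U = 1%:M.

Lemma unitaryC m (U : 'M[C]_m) : unitary U -> ctrmx U *m U = 1%:M.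
Proof. exact: mulmx1C. Qed.

Lemma unitary_unit m (U : 'M[C]_m) : unitary U -> U \in unitmx.
Proof. by move=> /mulmx1_unit []. Qed.

Lemma unitary_inv m (U : 'M[C]_m) : unitary U -> invmx U = ctrmx U.
Proof.
move=> hU; have uU := unitary_unit hU.
by rewrite -[RHS]mul1mx -(mulVmx uU) -mulmxA hU mulmx1.
Qed.

Lemma unitary_ct m (U : 'M[C]_m) : unitary U -> unitary (ctrmx U).
Proof. by move=> hU; rewrite /unitary ctrmxK unitaryC. Qed.

Lemma unitary_mul m (U V : 'M[C]_m) : unitary U -> unitary V -> unitary (U *m V).
Proof.
move=> hU hV; rewrite /unitary ctrmx_mul mulmxA -(mulmxA U) hV mulmx1 //.
Qed.

Lemma hpd_spectral m (A : 'M[C]_m) : hpd A ->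
  exists U : 'M[C]_m, exists d : 'rV[C]_m,
    [/\ unitary U, forall i, 0 < d 0 i & A = ctrmx U *m diag_mx d *m U].
Proof.
move=> [hA pA].
have hs : A \is hermsymmx.
  by rewrite qualifE expr0 scale1r -ctrmxE hA.
have /orthomx_spectralP eA := hermitian_normalmx hs.
set U := spectralmx A in eA; set d := spectral_diag A in eA.
have uU : unitary U.
  have := spectral_unitarymx A; rewrite qualifE -ctrmxE => /eqP.
  done.
rewrite (unitary_inv uU) in eA.
exists U, d; split => // i.
set v : 'cV[C]_m := ctrmx U *m delta_mx i 0.
have vN0 : v != 0.
  apply/eqP => v0.
  have : U *m v = 0 by rewrite v0 mulmx0.
  rewrite /v mulmxA uU mul1mx => /matrixP /(_ i 0).
  by rewrite !mxE !eqxx /= => /eqP; rewrite oner_eq0.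
have := pA v vN0.
rewrite eA /v !ctrmx_mul ctrmxK.
have -> : ctrmx (delta_mx i 0 : 'cV[C]_m) = delta_mx 0 i.
  by apply/matrixP => a b; rewrite !mxE rmorphMn rmorph1 andbC.
rewrite !mulmxA -(mulmxA _ U (ctrmx U)) uU mulmx1.
rewrite -(mulmxA _ U (ctrmx U)) uU mulmx1.
rewrite -rowE -colE !mxE.
by rewrite eqxx mulr1n.
Qed.

End Basics.


Section Scalar.
Variable F : numFieldType.

Definition bE (x : F) k := x ^+ k.+1 - k.+1%:R * x + k%:R.

Lemma bE_rec (x : F) k : bE x k.+1 = x * bE x k + k.+1%:R * (x - 1) ^+ 2.
Proof.
rewrite /bE exprS; set p := x ^+ k.+1.
ring.
Qed.

Lemma bE_ge0 (x : F) k : 0 <= x -> 0 <= bE x k.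
Proof.
move=> x0; elim: k => [|k IH]; first by rewrite /bE expr1 mul1r subrr add0r.
rewrite bE_rec addr_ge0 //; first by rewrite mulr_ge0.
by rewrite mulr_ge0 ?ler0n // real_exprn_even_ge0 // realB ?ger0_real.
Qed.

Lemma bE_gt0 (x : F) k : 0 <= x -> x != 1 -> 0 < bE x k.+1.
Proof.
move=> x0 x1; rewrite bE_rec ltr_wpDl //; first by rewrite mulr_ge0 ?bE_ge0.
rewrite mulr_gt0 ?ltr0Sn // real_exprn_even_gt0 ?realB ?ger0_real //.
by rewrite subr_eq0 x1.
Qed.

Definition hfun n (a b : F) :=
  a^-1 ^+ n - b^-1 ^+ n + n%:R * (b^-1 ^+ n.+1 * a - b^-1 ^+ n).

Lemma hfun_eq n (a b : F) : 0 < a -> 0 < b ->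
  hfun n a b = (a ^+ n * (b / a) ^+ n * (b / a))^-1 * bE (b / a) n.
Proof.
move=> a0 b0; set x := b / a.
have x0 : 0 < x by rewrite divr_gt0.
have eb : b = x * a by rewrite /x mulfVK ?gt_eqF.
rewrite /hfun /bE eb; clearbody x; clear eb.
rewrite !exprVn !exprMn !exprS.
set p := a ^+ n; set q := x ^+ n.
have p0 : p != 0 by rewrite expf_neq0 ?gt_eqF.
have q0 : q != 0 by rewrite expf_neq0 ?gt_eqF.
have a0' : a != 0 by rewrite gt_eqF.
have x0' : x != 0 by rewrite gt_eqF.
field.
by rewrite x0' q0 p0 a0'.
Qed.

Lemma hfun_ge0 n (a b : F) : 0 < a -> 0 < b -> 0 <= hfun n a b.
Proof.
move=> a0 b0; rewrite hfun_eq //.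
have x0 : 0 <= b / a by rewrite divr_ge0 ?ltW.
apply: mulr_ge0; last exact: bE_ge0.
rewrite invr_ge0; apply: mulr_ge0 => //; apply: mulr_ge0; apply: exprn_ge0 => //.
exact: ltW.
Qed.

Lemma hfun_eq0 n (a b : F) : (1 <= n)%N -> 0 < a -> 0 < b -> hfun n a b = 0 -> a = b.
Proof.
case: n => // n _ a0 b0; rewrite hfun_eq //.
have [x1|x1] := eqVneq (b / a) 1.
  by move=> _; rewrite (divr1_eq x1).
move=> /eqP; rewrite mulf_eq0 invr_eq0 !mulf_eq0 !expf_eq0 !gt_eqF ?divr_gt0 //=.
- by apply: bE_gt0 => //; rewrite divr_ge0 ?ltW.
- by rewrite invr_gt0.
Qed.

End Scalar.


Section Klein.
Variable C : numClosedFieldType.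
Variable m : nat.
Implicit Types (U V A B M : 'M[C]_m) (d : 'rV[C]_m).

Lemma conj_pow U M k : unitary U ->
  (ctrmx U *m M *m U) ^+ k = ctrmx U *m M ^+ k *m U.
Proof.
move=> hU; elim: k => [|k IH].
  by rewrite !expr0 -idmxE mulmx1 unitaryC.
rewrite !exprS IH.
set X := ctrmx U *m M *m U.
set Y := ctrmx U *m M ^+ k *m U.
have -> : X * Y = X *m Y by [].
have -> : M * M ^+ k = M *m M ^+ k by [].
by rewrite /X /Y !mulmxA -(mulmxA _ U (ctrmx U)) hU mulmx1.
Qed.

Lemma diag_pow d k : diag_mx d ^+ k = diag_mx (\row_j (d 0 j ^+ k)).
Proof.
elim: k => [|k IH].
  by rewrite expr0 -idmxE; apply/matrixP => i j; rewrite !mxE expr0.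
rewrite exprS IH -mulmxE mulmx_diag; congr diag_mx.
by apply/rowP => j; rewrite !mxE exprS.
Qed.

Lemma conj_AG U d : unitary U -> (forall i, d 0 i != 0) ->
  (ctrmx U *m diag_mx d *m U) *m (ctrmx U *m diag_mx (\row_j (d 0 j)^-1) *m U) = 1%:M.
Proof.
move=> hU dn0.
rewrite !mulmxA -(mulmxA _ U (ctrmx U)) hU mulmx1.
rewrite -(mulmxA _ (diag_mx d)) mulmx_diag.
have -> : diag_mx (\row_j (d 0 j * (\row_j (d 0 j)^-1) 0 j)) = 1%:M.
  by apply/matrixP => i j; rewrite !mxE divff.
by rewrite mulmx1 unitaryC.
Qed.

Lemma conj_unit U d : unitary U -> (forall i, d 0 i != 0) ->
  (ctrmx U *m diag_mx d *m U) \in unitmx.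
Proof. by move=> hU dn0; have [] := mulmx1_unit (conj_AG hU dn0). Qed.

Lemma conj_inv U d : unitary U -> (forall i, d 0 i != 0) ->
  invmx (ctrmx U *m diag_mx d *m U) =
  ctrmx U *m diag_mx (\row_j (d 0 j)^-1) *m U.
Proof.
move=> hU dn0; have AG := conj_AG hU dn0; have uA := conj_unit hU dn0.
move: AG uA; set A := ctrmx U *m _ *m U; set G := ctrmx U *m _ *m U => AG uA.
by move/(congr1 (mulmx (invmx A))): AG; rewrite mulmxA mulVmx // mul1mx mulmx1.
Qed.

Lemma conj_inv_pow U d k : unitary U -> (forall i, d 0 i != 0) ->
  invmx (ctrmx U *m diag_mx d *m U) ^+ k =
  ctrmx U *m diag_mx (\row_j ((d 0 j)^-1 ^+ k)) *m U.
Proof.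
move=> hU dn0; rewrite conj_inv // conj_pow // diag_pow; congr (_ *m diag_mx _ *m _).
by apply/rowP => j; rewrite !mxE.
Qed.

Lemma conj_tr U (M : 'M[C]_m) : unitary U -> \tr (ctrmx U *m M *m U) = \tr M.
Proof. by move=> hU; rewrite mxtrace_mulC mulmxA hU mul1mx. Qed.

Lemma tr_diag4 d (P : 'M[C]_m) e (Q : 'M[C]_m) :
  \tr (diag_mx d *m P *m diag_mx e *m Q) =
  \sum_j \sum_i d 0 j * P j i * e 0 i * Q i j.
Proof.
rewrite /mxtrace; apply: eq_bigr => j _; rewrite !mxE; apply: eq_bigr => i _.
by rewrite mul_mx_diag mul_diag_mx !mxE.
Qed.

Definition wq (Q : 'M[C]_m) i j := Q i j * (Q i j)^*.

Lemma unitary_row (Q : 'M[C]_m) i : unitary Q -> \sum_j wq Q i j = 1.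
Proof.
move=> hQ; have /matrixP /(_ i i) := hQ.
by rewrite !mxE eqxx /= mulr1n => <-; apply: eq_bigr => j _; rewrite !mxE.
Qed.

Lemma unitary_col (Q : 'M[C]_m) j : unitary Q -> \sum_i wq Q i j = 1.
Proof.
move=> /unitaryC hQ; have /matrixP /(_ j j) := hQ.
by rewrite !mxE eqxx /= mulr1n => <-; apply: eq_bigr => i _; rewrite !mxE mulrC.
Qed.

Definition Kf n A B :=
  \tr (invmx A ^+ n) - \tr (invmx B ^+ n) + n%:R * \tr (invmx B ^+ n.+1 *m (A - B)).

Lemma Kf_sum n U V (a b : 'rV[C]_m) : unitary U -> unitary V ->
  (forall i, 0 < a 0 i) -> (forall i, 0 < b 0 i) ->
  Kf n (ctrmx U *m diag_mx a *m U) (ctrmx V *m diag_mx b *m V) =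
  \sum_i \sum_j wq (U *m ctrmx V) i j * hfun n (a 0 i) (b 0 j).
Proof.
move=> hU hV a0 b0.
have an0 i : a 0 i != 0 by rewrite gt_eqF.
have bn0 i : b 0 i != 0 by rewrite gt_eqF.
set Q := U *m ctrmx V.
have hQ : unitary Q by apply: unitary_mul => //; apply: unitary_ct.
set A := ctrmx U *m diag_mx a *m U; set B := ctrmx V *m diag_mx b *m V.
have trA : \tr (invmx A ^+ n) = \sum_i (a 0 i)^-1 ^+ n.
  by rewrite conj_inv_pow // conj_tr // mxtrace_diag; apply: eq_bigr => i _; rewrite mxE.
have trB : \tr (invmx B ^+ n) = \sum_j (b 0 j)^-1 ^+ n.
  by rewrite conj_inv_pow // conj_tr // mxtrace_diag; apply: eq_bigr => i _; rewrite mxE.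
have tZB : \tr (invmx B ^+ n.+1 *m B) = \tr (invmx B ^+ n).
  rewrite exprSr.
  have -> : invmx B ^+ n * invmx B *m B = invmx B ^+ n *m (invmx B *m B).
    by rewrite -mulmxA.
  by rewrite mulVmx ?mulmx1 // conj_unit.
have tZA : \tr (invmx B ^+ n.+1 *m A) =
    \sum_i \sum_j (b 0 j)^-1 ^+ n.+1 * (Q i j)^* * a 0 i * Q i j.
  rewrite conj_inv_pow // /A.
  rewrite -!mulmxA mxtrace_mulC !mulmxA.
  have -> : diag_mx (\row_j (b 0 j)^-1 ^+ n.+1) *m V *m ctrmx U *m diag_mx a *m U *m ctrmx V
     = diag_mx (\row_j (b 0 j)^-1 ^+ n.+1) *m ctrmx Q *m diag_mx a *m Q.
    by rewrite /Q ctrmx_mul ctrmxK !mulmxA.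
  rewrite tr_diag4 exchange_big /=; apply: eq_bigr => i _; apply: eq_bigr => j _.
  by rewrite /ctrmx !mxE.
rewrite /Kf mulmxBr raddfB /= tZB tZA trA trB.
have e1 : \sum_i (a 0 i)^-1 ^+ n = \sum_i \sum_j wq Q i j * (a 0 i)^-1 ^+ n.
  by apply: eq_bigr => i _; rewrite -mulr_suml unitary_row // mul1r.
have e2 : \sum_j (b 0 j)^-1 ^+ n = \sum_i \sum_j wq Q i j * (b 0 j)^-1 ^+ n.
  rewrite exchange_big /=.
  by apply: eq_bigr => j _; rewrite -mulr_suml unitary_col // mul1r.
rewrite e1 e2.
rewrite -!sumrB mulr_sumr -big_split /=; apply: eq_bigr => i _.
rewrite -!sumrB mulr_sumr -big_split /=; apply: eq_bigr => j _.
rewrite /wq /hfun; ring.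
Qed.



Lemma Kf_ge0 n A B : hpd A -> hpd B -> 0 <= Kf n A B.
Proof.
move=> /hpd_spectral [U [a [hU a0 ->]]] /hpd_spectral [V [b [hV b0 ->]]].
rewrite Kf_sum //; apply: sumr_ge0 => i _; apply: sumr_ge0 => j _.
by rewrite mulr_ge0 ?mul_conjC_ge0 ?hfun_ge0.
Qed.

Lemma Kf_gt0 n A B : hpd A -> hpd B -> (1 <= n)%N -> A != B -> 0 < Kf n A B.
Proof.
move=> hA hB n1 AB; rewrite lt_def Kf_ge0 // andbT; apply: contra AB => /eqP.
move: hA hB => /hpd_spectral [U [a [hU a0 ->]]] /hpd_spectral [V [b [hV b0 ->]]].
rewrite Kf_sum // => K0.
set Q := U *m ctrmx V in K0.
have eQ : Q = U *m ctrmx V by [].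
clearbody Q.
have t_ge0 i j : 0 <= wq Q i j * hfun n (a 0 i) (b 0 j).
  by rewrite mulr_ge0 ?mul_conjC_ge0 ?hfun_ge0.
have H1 := psumr_eq0P (fun i _ => sumr_ge0 _ (fun j _ => t_ge0 i j)) K0.
have H2 i j : wq Q i j * hfun n (a 0 i) (b 0 j) = 0.
  exact: (psumr_eq0P (fun j _ => t_ge0 i j) (H1 i isT)).
have DQ : diag_mx a *m Q = Q *m diag_mx b.
  apply/matrixP => i j; rewrite mul_diag_mx mul_mx_diag !mxE.
  have [->|Qn0] := eqVneq (Q i j) 0; first by rewrite mulr0 mul0r.
  have := H2 i j; move/eqP; rewrite mulf_eq0 /wq mul_conjC_eq0 (negPf Qn0) /=.
  by move/eqP/(hfun_eq0 n1 (a0 i) (b0 j)) ->; rewrite mulrC.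
apply/eqP.
rewrite -[ctrmx U *m diag_mx a *m U]mulmx1 -(unitaryC hV).
have -> : ctrmx U *m diag_mx a *m U *m (ctrmx V *m V) =
   ctrmx U *m (diag_mx a *m Q) *m V by rewrite eQ !mulmxA.
by rewrite DQ eQ !mulmxA (unitaryC hU) mul1mx.
Qed.

End Klein.


Section Main.
Variable C : numClosedFieldType.
Variable m : nat.
Implicit Types (U V W T A B M X Y : 'M[C]_m).

Lemma quad_entry (v : 'cV[C]_m) (c1 c2 : C) Y1 Y2 :
  (ctrmx v *m (c1 *: Y1 + c2 *: Y2) *m v) 0 0 =
  c1 * (ctrmx v *m Y1 *m v) 0 0 + c2 * (ctrmx v *m Y2 *m v) 0 0.
Proof.
by rewrite mulmxDr mulmxDl -!scalemxAr -!scalemxAl !mxE.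
Qed.

Lemma hpd_comb (c1 c2 : C) Y1 Y2 : 0 < c1 -> 0 < c2 -> hpd Y1 -> hpd Y2 ->
  hpd (c1 *: Y1 + c2 *: Y2).
Proof.
move=> c10 c20 [h1 p1] [h2 p2]; split.
  by rewrite /Defs.hermitian ctrmxD !ctrmxZ h1 h2 !conj_Creal ?gtr0_real.
by move=> v vn0; rewrite quad_entry addr_gt0 ?mulr_gt0 ?p1 ?p2.
Qed.

Lemma hpd_cong W Y : W \in unitmx -> hpd Y -> hpd (ctrmx W *m Y *m W).
Proof.
move=> uW [hY pY]; split.
  by rewrite /Defs.hermitian !ctrmx_mul ctrmxK hY mulmxA.
move=> v vn0.
have Wv : W *m v != 0.
  apply: contra vn0 => /eqP Wv0; apply/eqP.
  by rewrite -(mulKmx uW v) Wv0 mulmx0.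
have := pY _ Wv; rewrite ctrmx_mul !mulmxA //.
Qed.

Lemma sqrt_decomp X : hpd X -> exists T, T \in unitmx /\ X = T *m ctrmx T.
Proof.
move=> /hpd_spectral [U [a [hU a0 ->]]].
set s : 'rV[C]_m := \row_j sqrtC (a 0 j).
have s0 j : 0 < s 0 j by rewrite mxE sqrtC_gt0.
have s2 j : s 0 j * s 0 j = a 0 j by rewrite mxE -expr2 sqrtCK.
have sr j : (s 0 j)^* = s 0 j by rewrite conj_Creal ?gtr0_real.
clearbody s.
exists (ctrmx U *m diag_mx s); split.
  have sn0 j : s 0 j != 0 by rewrite gt_eqF.
  have : (ctrmx U *m diag_mx s) *m (diag_mx (\row_j (s 0 j)^-1) *m U) = 1%:M.
    rewrite -mulmxA (mulmxA (diag_mx s)) mulmx_diag.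
    have -> : diag_mx (\row_j (s 0 j * (\row_j (s 0 j)^-1) 0 j)) = 1%:M.
      by apply/matrixP => i j; rewrite !mxE divff.
    by rewrite mul1mx unitaryC.
  by case/mulmx1_unit.
rewrite ctrmx_mul ctrmxK ctrmx_diag -!mulmxA (mulmxA (diag_mx s)) mulmx_diag.
congr (_ *m (diag_mx _ *m _)); apply/rowP => j; rewrite !mxE.
by rewrite sr s2.
Qed.

Lemma pow_swap (P S : 'M[C]_m) k :
  (P *m S) ^+ k.+1 = P *m (S *m P) ^+ k *m S.
Proof.
elim: k => [|k IH]; first by rewrite expr1 expr0 -idmxE mulmx1.
rewrite exprS IH.
have -> : (P *m S) * (P *m (S *m P) ^+ k *m S) = (P *m S) *m (P *m (S *m P) ^+ k *m S) by [].
rewrite [(S *m P) ^+ k.+1]exprS.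
have -> : (S *m P) * (S *m P) ^+ k = (S *m P) *m (S *m P) ^+ k by [].
by rewrite !mulmxA.
Qed.

Lemma trace_powC (P S : 'M[C]_m) k : \tr ((P *m S) ^+ k) = \tr ((S *m P) ^+ k).
Proof.
case: k => [|k]; first by rewrite !expr0.
rewrite pow_swap -mulmxA mxtrace_mulC -mulmxA exprSr.
by [].
Qed.

Lemma invmx_mul (P S : 'M[C]_m) : P \in unitmx -> S \in unitmx ->
  invmx (P *m S) = invmx S *m invmx P.
Proof.
move=> uP uS; have uPS : P *m S \in unitmx by rewrite unitmx_mul uP uS.
have e : (P *m S) *m (invmx S *m invmx P) = 1%:M.
  by rewrite mulmxA -(mulmxA P) mulmxV // mulmx1 mulmxV.
by move/(congr1 (mulmx (invmx (P *m S)))): e; rewrite mulmxA mulVmx // mul1mx mulmx1.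
Qed.

Lemma main_gen n X Y1 Y2 (c1 c2 : C) :
  hpd X -> (1 <= n)%N -> hpd Y1 -> hpd Y2 -> Y1 != Y2 ->
  0 < c1 -> 0 < c2 -> c1 + c2 = 1 ->
  fXn X n (c1 *: Y1 + c2 *: Y2) < c1 * fXn X n Y1 + c2 * fXn X n Y2.
Proof.
move=> hX n1 hY1 hY2 Y12 c10 c20 c12.
have [T [uT eX]] := sqrt_decomp hX.
set W := ctrmx (invmx T).
have WT : W *m ctrmx T = 1%:M by rewrite /W -ctrmx_mul mulmxV // ctrmx1.
have uW : W \in unitmx by case: (mulmx1_unit WT).
have cW : ctrmx W = invmx T by rewrite /W ctrmxK.
have ucW : ctrmx W \in unitmx by rewrite cW unitmx_inv.
have iW : invmx W = ctrmx T.
  by move/(congr1 (mulmx (invmx W))): WT; rewrite mulmxA mulVmx // mul1mx mulmx1.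
pose Aof Y := ctrmx W *m Y *m W.
have hA Y : hpd Y -> hpd (Aof Y) by move=> hY; apply: hpd_cong.
have fA Y : hpd Y -> fXn X n Y = \tr (invmx (Aof Y) ^+ n).
  move=> hY.
  have uY : Y \in unitmx.
    have [U [a [hU a0 eY]]] := hpd_spectral hY.
    by rewrite eY conj_unit // => i; rewrite gt_eqF.
  have -> : invmx (Aof Y) = ctrmx T *m (invmx Y *m T).
    rewrite /Aof !invmx_mul ?unitmx_mul ?uW ?ucW ?uY // iW cW invmxK.
    by rewrite mulmxA.
  by rewrite trace_powC -mulmxA -eX trace_powC.
have Alin : Aof (c1 *: Y1 + c2 *: Y2) = c1 *: Aof Y1 + c2 *: Aof Y2.
  by rewrite /Aof mulmxDr mulmxDl -!scalemxAr -!scalemxAl.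
have Ainj : Aof Y1 != Aof Y2.
  apply: contra Y12 => /eqP e; apply/eqP.
  move/(congr1 (fun Z => invmx (ctrmx W) *m Z *m invmx W)): e.
  by rewrite /Aof -!(mulmxA (ctrmx W)) !mulKmx // !mulmxK.
have hM := hpd_comb c10 c20 hY1 hY2.
rewrite !fA // Alin.
set A1 := Aof Y1; set A2 := Aof Y2; set M := c1 *: A1 + c2 *: A2.
have hA1 : hpd A1 by apply: hA.
have hA2 : hpd A2 by apply: hA.
have hMA : hpd M by rewrite /M -Alin; apply: hA.
set Z := invmx M ^+ n.+1.
have lin : c1 * Kf n A1 M + c2 * Kf n A2 M =
    c1 * \tr (invmx A1 ^+ n) + c2 * \tr (invmx A2 ^+ n) - \tr (invmx M ^+ n).
  have z0 : c1 *: (A1 - M) + c2 *: (A2 - M) = 0.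
    rewrite !scalerBr addrACA -opprD -scalerDl c12 scale1r subrr //.
  have tz : c1 * \tr (Z *m (A1 - M)) + c2 * \tr (Z *m (A2 - M)) = 0.
    by rewrite -!mxtraceZ !scalemxAr -mxtraceD -mulmxDr z0 mulmx0 mxtrace0.
  rewrite /Kf -/Z.
  set g1 := \tr (invmx A1 ^+ n); set g2 := \tr (invmx A2 ^+ n).
  set gM := \tr (invmx M ^+ n).
  set t1 := \tr (Z *m (A1 - M)); set t2 := \tr (Z *m (A2 - M)) in tz *.
  have -> : c1 * (g1 - gM + n%:R * t1) + c2 * (g2 - gM + n%:R * t2) =
     c1 * g1 + c2 * g2 - (c1 + c2) * gM + n%:R * (c1 * t1 + c2 * t2) by ring.
  by rewrite tz c12 mulr0 addr0 mul1r.
rewrite -subr_gt0 -lin.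
have K1 := Kf_ge0 n hA1 hMA; have K2 := Kf_ge0 n hA2 hMA.
have [e1|n1M] := eqVneq A1 M.
  have n2M : A2 != M.
    apply: contra Ainj => /eqP e2; apply/eqP; by rewrite -/A1 -/A2 e1 e2.
  apply: ltr_wpDl; first by apply: mulr_ge0 => //; exact: ltW.
  by apply: mulr_gt0 => //; exact: Kf_gt0.
apply: ltr_wpDr; first by apply: mulr_ge0 => //; exact: ltW.
by apply: mulr_gt0 => //; exact: Kf_gt0.
Qed.

End Main.


Theorem lemma5p2 (R : realType) (m n : nat) (X : 'M[R[i]]_m) :
  hpd X -> (1 <= n)%N ->
  forall (Y1 Y2 : 'M[R[i]]_m) (t : R),
    hpd Y1 -> hpd Y2 -> Y1 != Y2 -> 0 < t < 1 ->
    fXn X n (t%:C%C *: Y1 + (1 - t)%:C%C *: Y2)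
      < t%:C%C * fXn X n Y1 + (1 - t)%:C%C * fXn X n Y2.
Proof.
move=> hX n1 Y1 Y2 t hY1 hY2 Y12 /andP[t0 t1].
apply: main_gen => //.
- by rewrite -(rmorph0 (real_complex R)) ltcR.
- by rewrite -(rmorph0 (real_complex R)) ltcR subr_gt0.
- by rewrite -rmorphD addrC subrK rmorph1.
Qed.
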